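(* Let $k\geq 2$ be an integer. The function $F^k$ is increasing on the interval $(2(k-1),\infty)$.
   Context: For a positive integer $k$, define $F^k:(0,\infty)\to\mathbb{R}$ by $F^k(x)=\delta_0^k(x)-k(x-k)-1$, where $\delta_0^k(x)=2x\sum_{j=1}^{k/2}\cos\left(\frac{(k-(2j-1))\pi}{x}\right)$ if $k$ is even, and $\delta_0^k(x)=x+2x\sum_{j=1}^{(k-1)/2}\cos\left(\frac{(k-(2j-1))\pi}{x}\right)$ if $k$ is odd (an empty sum is $0$). *)

(* Defs.v *)
From Stdlib Require Import Reals.
Open Scope R_scope.

Fixpoint cos_sum (k : nat) (x : R) (m : nat) : R :=
  match m with
  | O => 0
  | S m' => cos_sum k x m' + cos ((INR k - (2 * INR m - 1)) * PI / x)
  end.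

Definition delta0 (k : nat) (x : R) : R :=
  if Nat.even k then 2 * x * cos_sum k x (Nat.div2 k)
  else x + 2 * x * cos_sum k x (Nat.div2 k).

Definition Fk (k : nat) (x : R) : R :=
  delta0 k x - INR k * (x - INR k) - 1.

(* Main.v *)
Require Import Defs.
From Stdlib Require Import Reals Lra Lia.
From Coquelicot Require Import Coquelicot.
Open Scope R_scope.

Lemma u_pos t : 0 < t < PI / 2 -> 0 < cos t - 1 + t * sin t.
Proof.
  intros [H1 H2].
  set (s := t / 2).
  replace t with (2 * s) by (unfold s; field).
  rewrite sin_2a, cos_2a_sin.
  assert (Hs : 0 < s < PI / 4) by (unfold s; lra).
  assert (Hsin : 0 < sin s) by (apply sin_gt_0; lra).
  assert (Hlt : sin s < s) by (apply sin_lt_x; lra).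
  assert (Hc : 1/2 <= cos s).
  { rewrite <- cos_PI3. apply cos_decr_1; lra. }
  assert (0 < 2 * s * cos s - sin s) by nra.
  nra.
Qed.

Lemma term_mono a x y : 0 < a -> 2 * a < x -> x < y ->
  2 * x * cos (a * PI / x) - 2 * x < 2 * y * cos (a * PI / y) - 2 * y.
Proof.
  intros Ha Hx Hxy.
  assert (HPI := PI_RGT_0).
  destruct (MVT_cor2 (fun z => 2 * z * cos (a * PI / z) - 2 * z)
    (fun z => 2 * (cos (a * PI / z) - 1 + a * PI / z * sin (a * PI / z))) x y Hxy)
    as [c [Hc Hcb]].
  { intros c Hc. apply is_derive_Reals.
    auto_derive. lra. unfold Rdiv. field. lra. }
  assert (0 < cos (a * PI / c) - 1 + a * PI / c * sin (a * PI / c)).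
  { apply u_pos. split.
    - apply Rdiv_lt_0_compat; nra.
    - apply (Rmult_lt_reg_r c). lra. unfold Rdiv. rewrite Rmult_assoc, Rinv_l by lra. nra. }
  nra.
Qed.


Lemma sum_mono k x y m : 2 * (INR k - 1) < x -> x < y -> (2 * m <= k)%nat ->
  (m = 0)%nat \/
  2 * x * cos_sum k x m - 2 * INR m * x < 2 * y * cos_sum k y m - 2 * INR m * y.
Proof.
  intros Hx Hxy. induction m as [|m IH]; intros Hm; [now left|right].
  change (cos_sum k x (S m)) with (cos_sum k x m + cos ((INR k - (2 * INR (S m) - 1)) * PI / x)).
  change (cos_sum k y (S m)) with (cos_sum k y m + cos ((INR k - (2 * INR (S m) - 1)) * PI / y)).
  set (a := INR k - (2 * INR (S m) - 1)).
  assert (Hk : 2 * INR (S m) <= INR k).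
  { replace 2 with (INR 2) by (simpl; lra). rewrite <- mult_INR. apply le_INR. exact Hm. }
  assert (H0 : 0 <= INR m) by apply pos_INR.
  rewrite S_INR in Hk. 
  assert (Ha : 0 < a) by (unfold a; rewrite S_INR; lra).
  assert (Ha2 : 2 * a < x) by (unfold a; rewrite S_INR; lra).
  pose proof (term_mono a x y Ha Ha2 Hxy) as T.
  assert (Hm' : (2 * m <= k)%nat) by lia.
  rewrite S_INR.
  destruct (IH Hm') as [->|IH'].
  - replace (cos_sum k x 0) with 0 by reflexivity. replace (cos_sum k y 0) with 0 by reflexivity. rewrite INR_0. clearbody a. nra.
  - clearbody a. nra.
Qed.

Theorem proposition3p1 (k : nat) (hk : (2 <= k)%nat) :
  forall x y : R, 2 * (INR k - 1) < x -> x < y -> Fk k x < Fk k y.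
Proof.
  intros x y Hx Hxy.
  pose proof (Nat.div2_odd k) as Hd.
  rewrite <- Nat.negb_even in Hd.
  assert (Hm : (2 * Nat.div2 k <= k)%nat) by lia.
  destruct (sum_mono k x y (Nat.div2 k) Hx Hxy Hm) as [H0|H].
  { rewrite H0 in Hd. destruct (Nat.even k); simpl in Hd; lia. }
  unfold Fk, delta0.
  destruct (Nat.even k) eqn:E.
  - assert (Hd' : k = (2 * Nat.div2 k)%nat) by (simpl in Hd; lia).
    assert (H0 : INR k = 2 * INR (Nat.div2 k)).
    { rewrite Hd' at 1. rewrite mult_INR. simpl. lra. }
    rewrite H0. nra.
  - assert (Hd' : k = (2 * Nat.div2 k + 1)%nat) by (simpl in Hd; lia).
    assert (H0 : INR k = 2 * INR (Nat.div2 k) + 1).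
    { rewrite Hd' at 1. rewrite plus_INR, mult_INR. simpl. lra. }
    rewrite H0. nra.
Qed.
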